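(* Let $t\ge1$, $F=\mathbb{F}_{2^t}$, $A\subseteq F$ and $\alpha^*\in A$. Let $z_1,\dots,z_t\in F$ be such that $\beta_i:=\alpha^*-z_i$, $i=1,\dots,t$, form a basis of $F$ over $\mathbb{F}_2$, and let $g_i(x)=\beta_i(x-z_i)$. Then for every $\alpha\in A\setminus\{\alpha^*\}$, $\mathrm{rank}_{\mathbb{F}_2}\{g_1(\alpha),\dots,g_t(\alpha)\}\le t-1$. *)

(* Defs.v *)
From HB Require Import structures.
From mathcomp Require Import all_boot all_order all_algebra all_field.
Set Implicit Arguments. Unset Strict Implicit. Unset Printing Implicit Defensive.
Import GRing.Theory.
Local Open Scope ring_scope.

(* Linear algebra over F_2 inside a field F of characteristic 2, written out
   concretely: an F_2-linear combination of a family v : 'I_n -> F is a sum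
   \sum_(i in T) v i over a subset T (the coefficients are 0 or 1). *)

Definition F2indep (F : finFieldType) (n : nat) (v : 'I_n -> F) (S : {set 'I_n}) : bool :=
  [forall T : {set 'I_n}, ((T \subset S) && (\sum_(i in T) v i == 0)) ==> (T == set0)].

Definition F2spans (F : finFieldType) (n : nat) (v : 'I_n -> F) : Prop :=
  forall x : F, exists T : {set 'I_n}, x = \sum_(i in T) v i.

Definition F2basis (F : finFieldType) (n : nat) (v : 'I_n -> F) : Prop :=
  F2indep v setT /\ F2spans v.

Definition F2rank (F : finFieldType) (n : nat) (v : 'I_n -> F) : nat :=
  \max_(S : {set 'I_n} | F2indep v S) #|S|.

(* Main.v *)
Require Import Defs.
From HB Require Import structures.
From mathcomp Require Import all_boot all_order all_algebra all_field.
From mathcomp Require Import ring.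
Import GRing.Theory.
Local Open Scope ring_scope.

Theorem lemma3 (t : nat) (F : finFieldType) (ht : (1 <= t)%N)
  (hcard : #|F| = (2 ^ t)%N) (A : {set F}) (astar : F) (hA : astar \in A)
  (z : 'I_t -> F) (hbasis : F2basis (fun i => astar - z i)) :
  forall alpha : F, alpha \in A -> alpha != astar ->
    leq (F2rank (fun i : 'I_t => (astar - z i) * (alpha - z i))) (t - 1)%N.
Proof.
move=> alpha _ hne.
have ch2 : (2%N \in [pchar F]) := card_finPcharP hcard (erefl true).
set g := alpha - astar.
have g0 : g != 0 by rewrite /g subr_eq0.
case: hbasis => _ /(_ g) [T hT].
have T0 : T != set0.
  apply/negP => /eqP T0; move: g0; by rewrite hT T0 big_set0 eqxx.
have sq : forall (I : finType) (P : {set I}) (f : I -> F),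
    (\sum_(i in P) f i) ^+ 2 = \sum_(i in P) f i ^+ 2.
  move=> I P f; apply: (big_ind2 (fun a b => a ^+ 2 = b)).
  - by rewrite expr0n.
  - by move=> x1 x2 y1 y2 <- <-; rewrite sqrrD mulrn_pchar // addr0.
  - by [].
have dep : \sum_(i in T) (astar - z i) * (alpha - z i) = 0.
  have -> : \sum_(i in T) (astar - z i) * (alpha - z i)
      = \sum_(i in T) ((astar - z i) ^+ 2 + g * (astar - z i)).
    by apply: eq_bigr => i _; rewrite /g; ring.
  rewrite big_split /= -mulr_sumr -sq -hT -expr2 -mulr2n.
  exact: mulrn_pchar.
rewrite /F2rank; apply/bigmax_leqP => S indS.
rewrite leqNgt; apply/negP => hS.
have ST : S == setT.
  rewrite eqEcard subsetT cardsT card_ord /=.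
  by move: hS; rewrite subn1 prednK.
move: indS; rewrite (eqP ST) /F2indep => /forallP /(_ T).
by rewrite subsetT dep eqxx /= (negbTE T0).
Qed.
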